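(* Let $A\in\mathbb{R}^{m\times n}$ be semimonotone ($A^{\dagger}\geq 0$) and let $A=U_1-V_1=U_2-V_2$ be two convergent proper nonnegative splittings of the same type (both of type I or both of type II). If there exists $\alpha$ with $0<\alpha\leq 1$ such that $V_1\leq \alpha V_2$ and $\rho(A^{\dagger}V_i)>0$ for $i=1$ or $i=2$, then $\rho(U_1^{\dagger}V_1)\leq\rho(U_2^{\dagger}V_2)<1$ whenever $\alpha=1$, and $\rho(U_1^{\dagger}V_1)<\rho(U_2^{\dagger}V_2)<1$ whenever $0<\alpha<1$.
   Context: $A^{\dagger}$ denotes the Moore–Penrose inverse and $\rho(\cdot)$ the spectral radius. Inequalities are entrywise. A splitting $A=U-V$ is proper if $R(U)=R(A)$ and $N(U)=N(A)$; it is convergent if $\rho(U^{\dagger}V)<1$. A proper splitting is a proper nonnegative splitting of type I if $U^{\dagger}V\geq 0$, and of type II if $VU^{\dagger}\geq 0$. *)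

(* Defs.v *)
From HB Require Import structures.
From mathcomp Require Import all_boot all_order all_algebra.
From mathcomp Require Import complex.
From mathcomp Require Import boolp classical_sets reals.
Set Implicit Arguments. Unset Strict Implicit. Unset Printing Implicit Defensive.
Import Order.TTheory GRing.Theory Num.Theory.
Local Open Scope ring_scope.
Local Open Scope classical_set_scope.

Definition is_MPinv (R : realType) m n (A : 'M[R]_(m, n)) (X : 'M[R]_(n, m)) : Prop :=
  [/\ A *m X *m A = A, X *m A *m X = X, (A *m X)^T = A *m X & (X *m A)^T = X *m A].

Definition complexify (R : realType) n (A : 'M[R]_n) : 'M[R[i]]_n :=
  map_mx (fun x => x%:C%C) A.

Definition spectral_radius (R : realType) n (A : 'M[R]_n) : R :=
  sup [set Normc.normc z | z in [set z : R[i] | eigenvalue (complexify A) z]].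

Definition mx_nonneg (R : realType) m n (A : 'M[R]_(m, n)) : Prop :=
  forall i j, 0 <= A i j.
Definition mx_le (R : realType) m n (A B : 'M[R]_(m, n)) : Prop :=
  forall i j, A i j <= B i j.

Definition same_range (R : realType) m n (A U : 'M[R]_(m, n)) : Prop :=
  forall y : 'cV[R]_m, (exists x, y = A *m x) <-> (exists x, y = U *m x).
Definition same_null (R : realType) m n (A U : 'M[R]_(m, n)) : Prop :=
  forall x : 'cV[R]_n, A *m x = 0 <-> U *m x = 0.

Definition proper_splitting (R : realType) m n (A U V : 'M[R]_(m, n)) : Prop :=
  A = U - V /\ same_range A U /\ same_null A U.

(* Ud is the Moore-Penrose inverse of U. *)
Definition convergent_splitting (R : realType) m n (U V : 'M[R]_(m, n)) (Ud : 'M[R]_(n, m)) :=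
  spectral_radius (Ud *m V) < 1.
Definition type_I (R : realType) m n (U V : 'M[R]_(m, n)) (Ud : 'M[R]_(n, m)) :=
  mx_nonneg (Ud *m V).
Definition type_II (R : realType) m n (U V : 'M[R]_(m, n)) (Ud : 'M[R]_(n, m)) :=
  mx_nonneg (V *m Ud).

(* Main.v *)
Require Import Defs.
From HB Require Import structures.
From mathcomp Require Import all_boot all_order all_algebra.
From mathcomp Require Import complex.
From mathcomp Require Import boolp classical_sets reals.
From mathcomp Require Import ring lra.
Import Order.TTheory GRing.Theory Num.Theory.
Local Open Scope ring_scope.
Local Open Scope complex_scope.
Set Implicit Arguments. Unset Strict Implicit.

Lemma normcC (R : realType) (z : R[i]) : (Normc.normc z)%:C = `|z|.
Proof. by case: z. Qed.

Lemma norm_realC (R : realType) (x : R) : `|x%:C| = `|x|%:C :> R[i].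
Proof.
rewrite -normcC /=; congr (_%:C); rewrite expr0n /= addr0.
by rewrite sqrtr_sqr.
Qed.

Lemma eig_bound (R : realType) k (X : 'M[R]_k) (z : R[i]) :
  eigenvalue (complexify X) z ->
  `|z| <= (\sum_i \sum_j `|X i j|)%:C.
Proof.
move=> /eigenvalueP [v Hv vn0].
pose S : R[i] := \sum_j `|v 0 j|.
have Spos : 0 < S.
  rewrite lt_def sumr_ge0 // andbT; apply/eqP => S0.
  move/eqP: vn0; apply; apply/rowP => j; rewrite mxE.
  apply/eqP; rewrite -normr_eq0; apply/eqP.
  move: S0; rewrite /S => /eqP; rewrite psumr_eq0 // => /allP H.
  by apply/eqP; apply: H; rewrite mem_index_enum.
have Hj : forall j, `|z| * `|v 0 j| <= S * (\sum_l `|X l j|)%:C.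
  move=> j.
  have : (v *m complexify X) 0 j = (z *: v) 0 j by rewrite Hv.
  rewrite !mxE => E; rewrite -normrM -E.
  rewrite rmorph_sum mulr_suml.
  apply: (le_trans (ler_norm_sum _ _ _)); apply: ler_sum => l _.
  rewrite !mxE normrM norm_realC; apply: ler_wpM2l => //.
  by rewrite (bigD1 l) //= lerDl sumr_ge0 // => i _; rewrite lecR.
have : `|z| * S <= S * (\sum_i \sum_j `|X i j|)%:C.
  rewrite /S mulr_sumr.
  apply: (le_trans (ler_sum _ (fun j _ => Hj j))).
  rewrite -mulr_sumr; apply: ler_wpM2l; first exact: ltW.
  rewrite -rmorph_sum lecR exchange_big /=; done.
by rewrite mulrC ler_pM2l.
Qed.

Lemma rho_ge (R : realType) k (X : 'M[R]_k) (z : R[i]) :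
  eigenvalue (complexify X) z -> `|z| <= (spectral_radius X)%:C.
Proof.
move=> Hz; rewrite -normcC lecR; apply: ub_le_sup; last by exists z.
exists (\sum_i \sum_j `|X i j|) => _ [w Hw <-].
by rewrite -lecR normcC; apply: eig_bound.
Qed.

Lemma rho_ge0 (R : realType) k (X : 'M[R]_k) : 0 <= spectral_radius X.
Proof.
have [[z Hz]|H] := pselect (exists z, eigenvalue (complexify X) z).
  by rewrite -lecR rmorph0; exact: le_trans (normr_ge0 z) (rho_ge Hz).
rewrite /spectral_radius.
suff -> : [set z : R[i] | eigenvalue (complexify X) z]%classic = set0 by rewrite image_set0 sup0.
by apply/seteqP; split => // z /= Hz; apply: H; exists z.
Qed.

Lemma rho_le (R : realType) k (X : 'M[R]_k) (s : R) :
  (forall z, eigenvalue (complexify X) z -> `|z| <= s%:C) -> 0 <= s ->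
  spectral_radius X <= s.
Proof.
move=> H s0.
have [[z Hz]|H'] := pselect (exists z, eigenvalue (complexify X) z).
  apply: ge_sup; first by exists (Normc.normc z); exists z.
  by move=> _ [w Hw <-]; rewrite -lecR normcC; apply: H.
rewrite /spectral_radius.
suff -> : [set z : R[i] | eigenvalue (complexify X) z]%classic = set0 by rewrite image_set0 sup0.
by apply/seteqP; split => // z /= Hz; apply: H'; exists z.
Qed.

Lemma rho_pos (R : realType) k (X : 'M[R]_k) :
  0 < spectral_radius X -> exists z, eigenvalue (complexify X) z /\ 0 < `|z|.
Proof.
move=> H.
have [[z Hz]|H'] := pselect (exists z, eigenvalue (complexify X) z /\ 0 < `|z|).
  by exists z.
have : spectral_radius X <= 0.
  apply: rho_le => // z Hz; rewrite -normcC lecR.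
  case: (leP (Normc.normc z) 0) => // zp; exfalso; apply: H'; exists z.
  by split => //; rewrite -normcC -(rmorph0 (real_complex R)) ltcR.
by rewrite leNgt H.
Qed.

Fixpoint mpow (R : pzRingType) k (A : 'M[R]_k) n : 'M[R]_k :=
  if n is n'.+1 then A *m mpow A n' else 1%:M.

Lemma mpowSr (R : pzRingType) k (A : 'M[R]_k) n : mpow A n.+1 = mpow A n *m A.
Proof.
elim: n => [|n IH] /=; first by rewrite mulmx1 mul1mx.
by rewrite [in RHS]/= -mulmxA -IH.
Qed.

Lemma complexify_mpow (R : realType) k (A : 'M[R]_k) n :
  complexify (mpow A n) = mpow (complexify A) n.
Proof.
elim: n => [|n IH] /=; first by rewrite /complexify map_mx1.
by rewrite /complexify map_mxM -IH.
Qed.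

Lemma nonneg_mul (R : realType) m n p (A : 'M[R]_(m, n)) (B : 'M[R]_(n, p)) :
  mx_nonneg A -> mx_nonneg B -> mx_nonneg (A *m B).
Proof. by move=> HA HB i j; rewrite mxE sumr_ge0 // => l _; rewrite mulr_ge0. Qed.

Lemma le_mul (R : realType) m n p (A A' : 'M[R]_(m, n)) (B B' : 'M[R]_(n, p)) :
  mx_nonneg A -> mx_le A A' -> mx_nonneg B -> mx_le B B' ->
  mx_le (A *m B) (A' *m B').
Proof.
move=> HA HAA HB HBB i j; rewrite !mxE; apply: ler_sum => l _.
apply: ler_pM => //.
Qed.

Lemma nonneg1 (R : realType) k : mx_nonneg (1%:M : 'M[R]_k).
Proof. by move=> i j; rewrite mxE ler0n. Qed.

Lemma nonneg_mpow (R : realType) k (A : 'M[R]_k) n :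
  mx_nonneg A -> mx_nonneg (mpow A n).
Proof.
move=> HA; elim: n => [|n IH] /=; first exact: nonneg1.
exact: nonneg_mul.
Qed.

Lemma le_refl_mx (R : realType) m n (A : 'M[R]_(m, n)) : mx_le A A.
Proof. by move=> i j. Qed.

Lemma le_mpow (R : realType) k (A B : 'M[R]_k) n :
  mx_nonneg A -> mx_le A B -> mx_le (mpow A n) (mpow B n).
Proof.
move=> HA HAB; elim: n => [|n IH] /=; first exact: le_refl_mx.
apply: le_mul => //; exact: nonneg_mpow.
Qed.

Lemma nonneg_add (R : realType) m n (A B : 'M[R]_(m, n)) :
  mx_nonneg A -> mx_nonneg B -> mx_nonneg (A + B).
Proof. by move=> HA HB i j; rewrite mxE addr_ge0. Qed.

Lemma nonneg_scale (R : realType) m n (c : R) (A : 'M[R]_(m, n)) :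
  0 <= c -> mx_nonneg A -> mx_nonneg (c *: A).
Proof. by move=> c0 HA i j; rewrite mxE mulr_ge0. Qed.

Definition absrow (R : realType) k (w : 'rV[R[i]]_k) : 'rV[R]_k :=
  \row_j Normc.normc (w 0 j).

Lemma absrow_ge0 (R : realType) k (w : 'rV[R[i]]_k) : mx_nonneg (absrow w).
Proof.
move=> i j; rewrite mxE -lecR normcC. exact: normr_ge0.
Qed.

Lemma norm_mul_abs (R : realType) k p (w : 'rV[R[i]]_k) (M : 'M[R]_(k, p)) j :
  mx_nonneg M ->
  `|(w *m map_mx (fun x : R => x%:C) M) 0 j| <= ((absrow w *m M) 0 j)%:C.
Proof.
move=> HM; rewrite !mxE rmorph_sum.
apply: (le_trans (ler_norm_sum _ _ _)); apply: ler_sum => l _.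
by rewrite !mxE normrM rmorphM /= norm_realC (ger0_norm (HM l j)) normcC.
Qed.

Lemma geom_id (R : realType) k (H Q : 'M[R]_k) :
  H *m (1%:M - Q) = 1%:M ->
  forall K, H = \sum_(i < K) mpow Q i + H *m mpow Q K.
Proof.
move=> HQ; elim => [|K IH]; first by rewrite big_ord0 add0r /= mulmx1.
have E : H = 1%:M + H *m Q.
  by rewrite -{1}HQ mulmxBr mulmx1 subrK.
rewrite big_ord_recr /= -addrA {1}IH; congr (_ + _).
by rewrite {1}E mulmxDl mul1mx mulmxA.
Qed.

Lemma sum_le_H (R : realType) k (H Q : 'M[R]_k) :
  mx_nonneg Q -> mx_nonneg H -> H *m (1%:M - Q) = 1%:M ->
  forall K, mx_le (\sum_(i < K) mpow Q i) H.
Proof.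
move=> HQ HH E K i j; rewrite [in X in _ <= X](geom_id E K) mxE lerDl.
by apply: nonneg_mul => //; exact: nonneg_mpow.
Qed.

Lemma eig_mpow (F : fieldType) k (M : 'M[F]_k) (v : 'rV[F]_k) z :
  v *m M = z *: v -> forall K, v *m mpow M K = z ^+ K *: v.
Proof.
move=> Hv; elim => [|K IH] /=; first by rewrite mulmx1 expr0 scale1r.
by rewrite mulmxA Hv -scalemxAl IH scalerA exprS.
Qed.

Lemma rV_nz (F : fieldType) k (v : 'rV[F]_k) : v != 0 -> exists j, v 0 j != 0.
Proof.
move=> vn0; apply/existsP; apply: contraNT vn0; rewrite negb_exists => /forallP H.
by apply/eqP/rowP => j; rewrite mxE; apply/eqP; move/negPn: (H j).
Qed.

Lemma MC (R : realType) k (P Q H : 'M[R]_k) :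
  mx_nonneg P -> mx_le P Q -> mx_nonneg Q -> mx_nonneg H ->
  H *m (1%:M - Q) = 1%:M ->
  forall z, eigenvalue (complexify P) z -> `|z| < 1.
Proof.
move=> HP HPQ HQ HH E z /eigenvalueP [v Hv vn0].
rewrite -normcC -(rmorph1 (real_complex R)) ltcR ltNge; apply/negP => z1.
pose a := absrow v.
have a0 := absrow_ge0 v.
have c1 K j : a 0 j <= (a *m mpow Q K) 0 j.
  apply: (@le_trans _ _ ((a *m mpow P K) 0 j)); last first.
    exact: (le_mul a0 (le_refl_mx a) (nonneg_mpow K HP) (le_mpow K HP HPQ)).
  rewrite -lecR; apply: le_trans (norm_mul_abs v j (nonneg_mpow K HP)).
  rewrite (_ : map_mx _ _ = mpow (complexify P) K); last exact: complexify_mpow.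
  rewrite (eig_mpow Hv) !mxE normrM normrX normcC ler_peMl //.
  by apply: exprn_ege1; rewrite -normcC -(rmorph1 (real_complex R)) lecR.
have c2 K j : K%:R * a 0 j <= (a *m H) 0 j.
  apply: (@le_trans _ _ ((a *m \sum_(i < K) mpow Q i) 0 j)); last first.
    have Hs : mx_nonneg (\sum_(i < K) mpow Q i).
      by move=> i l; rewrite summxE sumr_ge0 // => m _; apply: nonneg_mpow.
    exact: (le_mul a0 (le_refl_mx a) Hs (sum_le_H HQ HH E K)).
  rewrite mulmx_sumr summxE mulr_natl -[in X in X <= _](card_ord K) -sumr_const.
  by apply: ler_sum => i _.
have [j vj] := rV_nz vn0.
have aj : 0 < a 0 j.
  rewrite mxE lt_def -lecR normcC normr_ge0 andbT.
  by apply: contra vj => /eqP /Normc.eq0_normc ->.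
have b0 : 0 <= (a *m H) 0 j / a 0 j.
  by rewrite divr_ge0 // ?(ltW aj) //; apply: nonneg_mul.
have := c2 (Num.Def.archi_bound ((a *m H) 0 j / a 0 j)) j.
rewrite -ler_pdivlMr // leNgt; move/negP; apply; exact: archi_boundP.
Qed.

Lemma bernoulli (R : realType) (p : R) n : 1 <= p -> 1 + n%:R * (p - 1) <= p ^+ n.
Proof.
move=> p1; elim: n => [|n IH]; first by rewrite mul0r addr0 expr0.
rewrite exprS -natr1.
have h1 : 0 <= p * (p ^+ n - (1 + n%:R * (p - 1))).
  by rewrite mulr_ge0 ?subr_ge0 //; apply: le_trans p1.
have h2 : 0 <= n%:R * ((p - 1) * (p - 1)).
  by rewrite mulr_ge0 // mulr_ge0 // subr_ge0.
nra.
Qed.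

Lemma geo_small (R : realType) (q b : R) : 0 <= q < 1 -> 0 < b ->
  exists J, q ^+ J <= b.
Proof.
move=> /andP [q0 q1] b0.
have [->|qn0] := eqVneq q 0; first by exists 1%N; rewrite expr1 ltW.
have qp : 0 < q by rewrite lt_def qn0.
pose p := q^-1.
have p1 : 1 < p by rewrite /p invf_gt1.
have hb : 0 <= (b * (p - 1))^-1 by rewrite invr_ge0 mulr_ge0 // ?subr_ge0 ?ltW.
exists (Num.Def.archi_bound (b * (p - 1))^-1).
set J := Num.Def.archi_bound _.
have HJ := archi_boundP hb; rewrite -/J in HJ.
have B := bernoulli J (ltW p1).
have : (b * (p - 1))^-1 * (p - 1) < J%:R * (p - 1) by rewrite ltr_pM2r ?subr_gt0.
rewrite invfM -mulrA mulVf ?subr_eq0 ?gt_eqF // mulr1 => Hb.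
have Hp : b^-1 < p ^+ J by apply: lt_le_trans B; lra.
rewrite /p exprVn in Hp.
rewrite -(invrK b) -(invrK (q ^+ J)) lef_pV2 ?posrE ?invr_gt0 ?exprn_gt0 //.
exact: ltW.
Qed.

Lemma RL (R : realType) (q : R) (x y : nat -> R) :
  0 <= q < 1 -> (forall K, 0 <= x K) ->
  (forall e, 0 < e -> exists N, forall K, (N <= K)%N -> y K <= e) ->
  (forall K, x K.+1 <= y K + q * x K) ->
  forall e, 0 < e -> exists N, forall K, (N <= K)%N -> x K <= e.
Proof.
move=> /andP [q0 q1] x0 Hy Hx e e0.
have d0 : 0 < e * (1 - q) / 2 by rewrite divr_gt0 // mulr_gt0 // subr_gt0.
have [N HN] := Hy _ d0.
pose c := Num.max (x N - e / 2) 0.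
have c0 : 0 <= c by rewrite le_max lexx orbT.
have Hj j : x (N + j)%N - e / 2 <= q ^+ j * c.
  elim: j => [|j IH]; first by rewrite addn0 expr0 mul1r le_max lexx.
  rewrite addnS exprS -mulrA.
  have h1 := Hx (N + j)%N.
  have h2 := HN (N + j)%N (leq_addr _ _).
  have h3 : q * (x (N + j)%N - e / 2) <= q * (q ^+ j * c) by rewrite ler_wpM2l.
  lra.
have e2 : 0 < e / 2 by rewrite divr_gt0.
have [J HJ] : exists J, q ^+ J * c <= e / 2.
  have [->|cn0] := eqVneq c 0; first by exists 0%N; rewrite mulr0 ltW.
  have cp : 0 < c by rewrite lt_def cn0.
  have [J HJ] := @geo_small R q (e / 2 / c) (introT andP (conj q0 q1)) (divr_gt0 e2 cp).
  by exists J; rewrite -ler_pdivlMr.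
exists (N + J)%N => K HK.
have := Hj (K - N)%N; rewrite subnKC; last by apply: leq_trans HK; apply: leq_addr.
move=> H1.
have : q ^+ (K - N) * c <= q ^+ J * c.
  apply: ler_wpM2r => //; apply: ler_wiXn2l => //; first exact: ltW.
  by rewrite leq_subRL ?(leq_trans (leq_addr _ _) HK).
lra.
Qed.

Lemma normc_ge0 (R : realType) (z : R[i]) : 0 <= Normc.normc z.
Proof. by rewrite -lecR normcC rmorph0 normr_ge0. Qed.

Definition msum (R : realType) k (U : 'M[R[i]]_k) : R :=
  \sum_i \sum_j Normc.normc (U i j).

Lemma msum_ge0 (R : realType) k (U : 'M[R[i]]_k) : 0 <= msum U.
Proof. by rewrite sumr_ge0 // => i _; rewrite sumr_ge0 // => j _; exact: normc_ge0. Qed.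

Lemma msumD (R : realType) k (U V : 'M[R[i]]_k) : msum (U + V) <= msum U + msum V.
Proof.
rewrite /msum -big_split /=; apply: ler_sum => i _.
rewrite -big_split /=; apply: ler_sum => j _; rewrite mxE; exact: le_normcD.
Qed.

Lemma msumZ (R : realType) k (c : R[i]) (U : 'M[R[i]]_k) :
  msum (c *: U) = Normc.normc c * msum U.
Proof.
rewrite /msum mulr_sumr; apply: eq_bigr => i _; rewrite mulr_sumr.
by apply: eq_bigr => j _; rewrite mxE Normc.normcM.
Qed.

Lemma msum_entry (R : realType) k (U : 'M[R[i]]_k) i j : Normc.normc (U i j) <= msum U.
Proof.
rewrite /msum (bigD1 i) //= (bigD1 j) //= -addrA lerDl addr_ge0 //.
  by rewrite sumr_ge0 // => l _; exact: normc_ge0.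
by rewrite sumr_ge0 // => l _; rewrite sumr_ge0 // => m _; exact: normc_ge0.
Qed.

Lemma rec_lemma (R : realType) k (M : 'M[R[i]]_k.+1) (q : R) (rs : seq R[i]) :
  0 <= q < 1 -> (forall z, z \in rs -> Normc.normc z <= q) ->
  forall U : 'M[R[i]]_k.+1, U *m (\prod_(z <- rs) (M - z%:M)) = 0 ->
  forall e, 0 < e -> exists N, forall K, (N <= K)%N -> msum (U *m mpow M K) <= e.
Proof.
move=> Hq; elim: rs => [|z rs IH] Hrs U HU.
  move: HU; rewrite big_nil mulmx1 => -> e e0; exists 0%N => K _.
  rewrite mul0mx /msum (eq_bigr (fun _ => 0)); first by rewrite big1 // ltW.
  by move=> i _; rewrite big1 // => j _; rewrite mxE Normc.normc0.
pose U' := U *m (M - z%:M).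
have HU' : U' *m \prod_(z <- rs) (M - z%:M) = 0.
  by move: HU; rewrite big_cons -mulmxE mulmxA.
have IH' := IH (fun w hw => Hrs w (mem_behead (s := z :: rs) hw)) U' HU'.
apply: (RL Hq (fun K => msum_ge0 _) IH') => K.
have E : U *m mpow M K.+1 = U' *m mpow M K + z *: (U *m mpow M K).
  rewrite /= mulmxA /U' scalemxAl -mulmxDl; congr (_ *m _).
  by rewrite mulmxBr mul_mx_scalar subrK.
rewrite E; apply: le_trans (msumD _ _) _; rewrite msumZ lerD2l.
by apply: ler_wpM2r; [exact: msum_ge0 | apply: Hrs; rewrite mem_head].
Qed.

Lemma normc_real (R : realType) (x : R) : Normc.normc (x%:C) = `|x|.
Proof. by apply: complexI; rewrite normcC norm_realC. Qed.

Lemma Pow (R : realType) k (Y : 'M[R]_k) : spectral_radius Y < 1 ->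
  forall e, 0 < e -> exists K, forall i j, `|mpow Y K i j| <= e.
Proof.
case: k Y => [|k] Y Hr e e0; first by exists 0%N => [[]].
pose M := complexify Y.
have CH := Cayley_Hamilton M.
have [rs Hrs] := closed_field_poly_normal (char_poly M).
rewrite (monicP (char_poly_monic M)) scale1r in Hrs.
have Hprod : \prod_(z <- rs) (M - z%:M) = 0.
  rewrite -CH Hrs rmorph_prod; apply: eq_bigr => z _.
  by rewrite rmorphB /= horner_mx_X horner_mx_C.
have Hroots : forall z, z \in rs -> Normc.normc z <= spectral_radius Y.
  move=> z zin; rewrite -lecR normcC; apply: rho_ge.
  by rewrite eigenvalue_root_char -/M Hrs root_prod_XsubC.
have Hq : 0 <= spectral_radius Y < 1 by rewrite rho_ge0 Hr.
have HU : (1%:M : 'M[R[i]]_k.+1) *m \prod_(z <- rs) (M - z%:M) = 0.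
  by rewrite mul1mx.
have [N HN] := rec_lemma Hq Hroots HU e0.
exists N => i j; have := HN N (leqnn N); rewrite mul1mx -complexify_mpow.
apply: le_trans; have := msum_entry (complexify (mpow Y N)) i j.
by rewrite mxE normc_real.
Qed.

Lemma unit_of_rho (R : realType) k (W : 'M[R]_k) :
  spectral_radius W < 1 -> (1%:M - W) \in unitmx.
Proof.
move=> Hr; rewrite unitmxE unitfE; apply/negP => /det0P [v vn0 Hv].
have E : v *m W = v by move/eqP: Hv; rewrite mulmxBr mulmx1 subr_eq0 => /eqP.
have : eigenvalue (complexify W) 1.
  apply/eigenvalueP; exists (map_mx (fun x : R => x%:C) v).
    by rewrite scale1r -map_mxM E.
  by rewrite map_mx_eq0.
move/rho_ge; rewrite normr1 -(rmorph1 (real_complex R)) lecR leNgt Hr //.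
Qed.

Lemma Neu (R : realType) k (W G : 'M[R]_k) :
  mx_nonneg W -> spectral_radius W < 1 -> G *m (1%:M - W) = 1%:M -> mx_nonneg G.
Proof.
move=> HW Hr E i j; rewrite leNgt; apply/negP => Gneg.
pose S := \sum_l `|G i l| + 1.
have S0 : 0 < S by rewrite ltr_pwDr // sumr_ge0.
have e0 : 0 < - G i j / 2 / S by rewrite !divr_gt0 // oppr_gt0.
have [K HK] := Pow Hr e0.
have H1 : G i j >= (G *m mpow W K) i j.
  rewrite [in X in _ <= X](geom_id E K) [X in _ <= X]mxE lerDr summxE sumr_ge0 // => l _.
  exact: nonneg_mpow.
have H2 : - (- G i j / 2) <= (G *m mpow W K) i j.
  rewrite mxE.
  have : `|\sum_l G i l * mpow W K l j| <= \sum_l `|G i l| * (- G i j / 2 / S).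
    apply: le_trans (ler_norm_sum _ _ _) _; apply: ler_sum => l _.
    by rewrite normrM ler_wpM2l.
  move=> H; rewrite -mulr_suml in H.
  have H' : (\sum_l `|G i l|) * (- G i j / 2 / S) <= - G i j / 2.
    rewrite mulrA ler_pdivrMr // mulrC ler_wpM2l ?lerDl //.
    by rewrite divr_ge0 // oppr_ge0 ltW.
  move: (le_trans H H'); rewrite ler_norml => /andP [] //.
have : - (- G i j / 2) <= G i j := le_trans H2 H1.
lra.
Qed.

Lemma eig_scale (R : realType) k (X : 'M[R]_k) (c : R) z :
  eigenvalue (complexify X) z -> eigenvalue (complexify (c *: X)) (c%:C * z).
Proof.
move=> /eigenvalueP [v Hv vn0]; apply/eigenvalueP; exists v => //.
by rewrite /complexify map_mxZ -/(complexify X) -scalemxAr Hv scalerA.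
Qed.

Lemma rho_scale (R : realType) k (X : 'M[R]_k) (c : R) :
  0 < c -> spectral_radius (c *: X) <= c * spectral_radius X.
Proof.
move=> c0; apply: rho_le; last by rewrite mulr_ge0 ?rho_ge0 ?ltW.
move=> z /(eig_scale (c^-1)); rewrite scalerA mulVf ?gt_eqF // scale1r => /rho_ge H.
rewrite -normcC lecR -ler_pdivrMl //.
have ci : 0 <= c^-1 by rewrite invr_ge0 ltW.
move: H; rewrite normrM norm_realC (ger0_norm ci) -normcC -rmorphM lecR.
by rewrite mulrC.
Qed.

Lemma B_nonneg (R : realType) k (W B : 'M[R]_k) :
  mx_nonneg W -> spectral_radius W < 1 -> (1%:M + B) *m (1%:M - W) = 1%:M ->
  mx_nonneg B /\ (1%:M + B) *m W = B.
Proof.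
move=> HW Hr E.
have EB : (1%:M + B) *m W = B.
  move/eqP: E; rewrite mulmxBr mulmx1 subr_eq => /eqP H.
  by apply: (addrI 1%:M); exact: esym H.
split => //; rewrite -EB; apply: nonneg_mul => //; exact: Neu E.
Qed.

Lemma complexify_id (R : realType) k (W B : 'M[R]_k) :
  (1%:M + B) *m (1%:M - W) = 1%:M ->
  (1%:M + complexify B) *m (1%:M - complexify W) = 1%:M.
Proof.
move=> E; have := congr1 (map_mx (fun x : R => x%:C)) E.
by rewrite map_mxM map_mxD map_mxB !map_mx1.
Qed.

Lemma rhoB_upper (R : realType) k (W B : 'M[R]_k) :
  spectral_radius W < 1 -> (1%:M + B) *m (1%:M - W) = 1%:M ->
  spectral_radius B * (1 - spectral_radius W) <= spectral_radius W.
Proof.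
move=> Hr E; set r := spectral_radius W.
have r0 : 0 <= r := rho_ge0 W.
have r1 : 0 < 1 - r by rewrite subr_gt0.
rewrite -ler_pdivlMr //; apply: rho_le; last by rewrite divr_ge0 // ltW.
move=> mu /eigenvalueP [v Hv vn0].
have Ec := complexify_id E.
have Ev : v = (1 + mu) *: (v - v *m complexify W).
  rewrite -[v in LHS](mulmx1 v) -Ec mulmxA (mulmxDr v 1%:M) mulmx1 Hv.
  by rewrite -{1}(scale1r v) -scalerDl -scalemxAl mulmxBr mulmx1.
have mu1 : 1 + mu != 0.
  by apply: contra vn0 => /eqP H; rewrite Ev H scale0r.
pose lam := 1 - (1 + mu)^-1.
have Hlam : eigenvalue (complexify W) lam.
  apply/eigenvalueP; exists v => //.
  have Ev' : (1 + mu)^-1 *: v = v - v *m complexify W.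
    by rewrite {1}Ev scalerA mulVf // scale1r.
  by rewrite scalerBl scale1r Ev' opprB addrCA subrr addr0.
have Hl := rho_ge Hlam; rewrite -/r -normcC lecR in Hl.
have Emu : mu * (1 - lam) = lam.
  by rewrite /lam; field.
have Hn : Normc.normc mu * Normc.normc (1 - lam) = Normc.normc lam.
  by rewrite -Normc.normcM Emu.
have Ht : 1 <= Normc.normc (1 - lam) + Normc.normc lam.
  by rewrite -(Normc.normc1 R) -{1}(subrK lam 1); exact: le_normcD.
have nm0 := normc_ge0 mu.
rewrite -normcC lecR ler_pdivlMr //.
nra.
Qed.


Lemma le_div_of_forall (R : realType) (r b : R) : 0 <= b -> 0 <= r -> r < 1 -> 0 < 1 + b ->
 (forall s, b / (1 + b) < s -> s < 1 -> r <= s) -> r <= b / (1 + b).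
Proof.
move=> b0 r0 r1 b1 Hs.
have hb : b / (1 + b) < 1 by rewrite ltr_pdivrMr // mul1r ltrDr.
rewrite leNgt; apply/negP => H.
have h1 : b / (1 + b) < (r + b / (1 + b)) / 2 by lra.
have h2 : (r + b / (1 + b)) / 2 < 1 by lra.
have := Hs _ h1 h2; lra.
Qed.

Lemma arith_cb (R : realType) (b s : R) : b < s * (1 + b) -> (1 - s) * b < s.
Proof. move=> H; lra. Qed.

Lemma rhoW_le_s (R : realType) k (W B : 'M[R]_k) (s : R) :
  mx_nonneg W -> spectral_radius W < 1 -> (1%:M + B) *m (1%:M - W) = 1%:M ->
  spectral_radius B / (1 + spectral_radius B) < s -> s < 1 ->
  spectral_radius W <= s.
Proof.
move=> HW Hr E bs s1.
have [B0 EB] := B_nonneg HW Hr E.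
have b0 := rho_ge0 B.
have b1 : 0 < 1 + spectral_radius B by rewrite ltr_pwDl.
have s0 : 0 < s by apply: le_lt_trans bs; rewrite divr_ge0 // ltW.
pose c := (1 - s) / s.
have c0 : 0 < c by rewrite divr_gt0 // subr_gt0.
have cb : c * spectral_radius B < 1.
  rewrite /c mulrAC ltr_pdivrMr // mul1r.
  by move: bs; rewrite ltr_pdivrMr // => /arith_cb.
pose C := c *: B.
have HrC : spectral_radius C < 1 by apply: le_lt_trans (rho_scale B c0) cb.
have C0 : mx_nonneg C by apply: nonneg_scale => //; exact: ltW.
pose H := invmx (1%:M - C).
have HC : H *m (1%:M - C) = 1%:M by rewrite mulVmx // unit_of_rho.
have H0 : mx_nonneg H := Neu C0 HrC HC.
pose Gs := H *m (1%:M + B).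
have Gs0 : mx_nonneg Gs by apply: nonneg_mul => //; apply: nonneg_add => //; exact: nonneg1.
have EGs : Gs *m (1%:M - s^-1 *: W) = 1%:M.
  rewrite -[in RHS]HC -mulmxA; congr (_ *m _).
  rewrite mulmxBr mulmx1 -scalemxAr EB /C -addrA; congr (_ + _).
  rewrite -{1}(scale1r B) -scalerBl -scaleNr; congr (_ *: _).
  rewrite /c; field; exact: lt0r_neq0.
have Ws0 : mx_nonneg (s^-1 *: W) by apply: nonneg_scale => //; rewrite invr_ge0 ltW.
apply: rho_le; last exact: ltW.
move=> z /(eig_scale (s^-1)) /(MC Ws0 (le_refl_mx _) Ws0 Gs0 EGs).
have si : 0 <= s^-1 by rewrite invr_ge0 ltW.
rewrite normrM norm_realC (ger0_norm si) -normcC -rmorphM -(rmorph1 (real_complex R)).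
by rewrite ltcR lecR mulrC ltr_pdivrMr // mul1r => /ltW.
Qed.

Lemma rhoW_upper (R : realType) k (W B : 'M[R]_k) :
  mx_nonneg W -> spectral_radius W < 1 -> (1%:M + B) *m (1%:M - W) = 1%:M ->
  spectral_radius W * (1 + spectral_radius B) <= spectral_radius B.
Proof.
move=> HW Hr E.
have b1 : 0 < 1 + spectral_radius B by rewrite ltr_pwDl // rho_ge0.
rewrite -ler_pdivlMr //; apply: le_div_of_forall => //; try exact: rho_ge0.
move=> s bs s1; exact: (rhoW_le_s HW Hr E bs s1).
Qed.

Lemma le_of_forall_gt (R : realType) (x y : R) : (forall t, x < t -> y <= t) -> y <= x.
Proof.
move=> H; rewrite leNgt; apply/negP => yx.
have h : x < (x + y) / 2 by lra.
have := H _ h; lra.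
Qed.

Lemma rho_mono (R : realType) k (B1 B2 : 'M[R]_k) (a : R) :
  0 < a -> mx_nonneg B1 -> mx_nonneg B2 -> mx_le B1 (a *: B2) ->
  spectral_radius B1 <= a * spectral_radius B2.
Proof.
move=> a0 HB1 HB2 Hle; apply: le_of_forall_gt => t ht.
have t0 : 0 < t by apply: le_lt_trans ht; rewrite mulr_ge0 ?rho_ge0 ?ltW.
pose Q := (a / t) *: B2.
have at0 : 0 < a / t by rewrite divr_gt0.
have HrQ : spectral_radius Q < 1.
  apply: le_lt_trans (rho_scale B2 at0) _.
  by rewrite mulrAC ltr_pdivrMr // mul1r.
have Q0 : mx_nonneg Q by apply: nonneg_scale => //; exact: ltW.
pose H := invmx (1%:M - Q).
have HQ : H *m (1%:M - Q) = 1%:M by rewrite mulVmx // unit_of_rho.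
have H0 : mx_nonneg H := Neu Q0 HrQ HQ.
have ti : 0 < t^-1 by rewrite invr_gt0.
have P0 : mx_nonneg (t^-1 *: B1) by apply: nonneg_scale => //; exact: ltW.
have PQ : mx_le (t^-1 *: B1) Q.
  move=> i j; rewrite !mxE [in X in _ <= X]mulrAC [in X in X <= _]mulrC ler_wpM2r ?(ltW ti) //.
  by have := Hle i j; rewrite mxE.
apply: rho_le; last exact: ltW.
move=> z /(eig_scale (t^-1)) /(MC P0 PQ Q0 H0 HQ).
rewrite normrM norm_realC (ger0_norm (ltW ti)) -normcC -rmorphM -(rmorph1 (real_complex R)).
by rewrite ltcR lecR mulrC ltr_pdivrMr // mul1r => /ltW.
Qed.


Lemma mx_ext_col (R : realType) m n (M N : 'M[R]_(m, n)) :
  (forall j, M *m (delta_mx j 0 : 'cV_n) = N *m (delta_mx j 0 : 'cV_n)) -> M = N.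
Proof.
move=> H; apply/matrixP => i j.
by have := congr1 (fun X : 'cV_m => X i 0) (H j); rewrite -!colE !mxE.
Qed.

Lemma proj_eq1 (R : realType) m n (A U : 'M[R]_(m, n)) (Ad Ud : 'M[R]_(n, m)) :
  is_MPinv A Ad -> is_MPinv U Ud -> same_range A U -> A *m Ad = U *m Ud.
Proof.
move=> [A1 A2 A3 A4] [U1 U2 U3 U4] Hr.
have PU : A *m Ad *m U = U.
  apply: mx_ext_col => j.
  have [x Hx] := (Hr (U *m (delta_mx j 0 : 'cV_n))).2 (ex_intro _ _ erefl).
  by rewrite -mulmxA Hx mulmxA A1.
have QA : U *m Ud *m A = A.
  apply: mx_ext_col => j.
  have [x Hx] := (Hr (A *m (delta_mx j 0 : 'cV_n))).1 (ex_intro _ _ erefl).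
  by rewrite -mulmxA Hx mulmxA U1.
have PQ : A *m Ad *m (U *m Ud) = U *m Ud by rewrite mulmxA PU.
have QP : U *m Ud *m (A *m Ad) = A *m Ad by rewrite mulmxA QA.
by rewrite -A3 -QP trmx_mul U3 A3 PQ.
Qed.

Lemma proj_eq2 (R : realType) m n (A U : 'M[R]_(m, n)) (Ad Ud : 'M[R]_(n, m)) :
  is_MPinv A Ad -> is_MPinv U Ud -> same_null A U -> Ad *m A = Ud *m U.
Proof.
move=> [A1 A2 A3 A4] [U1 U2 U3 U4] Hn.
have UP : U *m (Ad *m A) = U.
  apply/eqP; rewrite -subr_eq0 -{2}(mulmx1 U) -mulmxBr; apply/eqP.
  apply: mx_ext_col => j; rewrite mul0mx -mulmxA; apply/Hn.
  by rewrite mulmxA mulmxBr mulmx1 mulmxA A1 subrr mul0mx.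
have AQ : A *m (Ud *m U) = A.
  apply/eqP; rewrite -subr_eq0 -{2}(mulmx1 A) -mulmxBr; apply/eqP.
  apply: mx_ext_col => j; rewrite mul0mx -mulmxA; apply/Hn.
  by rewrite mulmxA mulmxBr mulmx1 mulmxA U1 subrr mul0mx.
have QP : Ud *m U *m (Ad *m A) = Ud *m U by rewrite -mulmxA UP.
have PQ : Ad *m A *m (Ud *m U) = Ad *m A by rewrite -mulmxA AQ.
by rewrite -U4 -QP trmx_mul A4 U4 PQ.
Qed.

Lemma splitting_id (R : realType) m n (A U V : 'M[R]_(m, n)) (Ad Ud : 'M[R]_(n, m)) :
  is_MPinv A Ad -> is_MPinv U Ud -> proper_splitting A U V ->
  (1%:M + Ad *m V) *m (1%:M - Ud *m V) = 1%:M /\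
  (1%:M + V *m Ad) *m (1%:M - V *m Ud) = 1%:M.
Proof.
move=> HA HU [EA [Hr Hn]].
have E1 := proj_eq1 HA HU Hr.
have E2 := proj_eq2 HA HU Hn.
have [U1 U2 _ _] := HU; have [A1 A2 _ _] := HA.
have K1 : Ad *m U *m Ud = Ad by rewrite -mulmxA -E1 mulmxA A2.
have K2 : Ad *m A *m Ud = Ud by rewrite E2 U2.
have EV : V = U - A by rewrite EA opprB addrC subrK.
split.
  have : Ad *m V *m (Ud *m V) = Ad *m V - Ud *m V.
    by rewrite mulmxA {1}EV mulmxBr !mulmxBl K1 K2.
  move=> H; rewrite mulmxBr mulmx1 mulmxDl mul1mx H.
  by rewrite (addrC (Ud *m V)) subrK addrK.
have : V *m Ad *m (V *m Ud) = V *m Ad - V *m Ud.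
  rewrite mulmxA {2}EV mulmxBr mulmxBl -!mulmxA.
  by rewrite (mulmxA Ad U) (mulmxA Ad A) K1 K2.
move=> H; rewrite mulmxBr mulmx1 mulmxDl mul1mx H.
by rewrite (addrC (V *m Ud)) subrK addrK.
Qed.

Lemma rho_XY_le (R : realType) p q (X : 'M[R]_(p, q)) (Y : 'M[R]_(q, p)) :
  spectral_radius (X *m Y) <= spectral_radius (Y *m X).
Proof.
apply: rho_le; last exact: rho_ge0.
move=> z /eigenvalueP [v Hv vn0].
have [->|zn0] := eqVneq z 0.
  by rewrite normr0 -(rmorph0 (real_complex R)) lecR rho_ge0.
apply: rho_ge; apply/eigenvalueP.
pose Xc := map_mx (fun x : R => x%:C) X.
pose Yc := map_mx (fun x : R => x%:C) Y.
have HvXY : v *m Xc *m Yc = z *: v by rewrite -mulmxA -map_mxM.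
exists (v *m Xc).
  by rewrite /complexify map_mxM -/Xc -/Yc mulmxA HvXY scalemxAl.
apply: contra vn0 => /eqP w0.
by move: HvXY; rewrite w0 mul0mx => /esym/eqP; rewrite scaler_eq0 (negbTE zn0).
Qed.

Lemma rho_XY (R : realType) p q (X : 'M[R]_(p, q)) (Y : 'M[R]_(q, p)) :
  spectral_radius (X *m Y) = spectral_radius (Y *m X).
Proof. by apply/eqP; rewrite eq_le !rho_XY_le. Qed.


Lemma final_arith (R : realType) (r1 r2 b1 b2 a : R) :
  r1 * (1 + b1) = b1 -> r2 * (1 + b2) = b2 -> 0 <= b1 -> 0 <= b2 ->
  b1 <= a * b2 -> 0 < a -> a <= 1 -> (0 < b1 \/ 0 < b2) -> r2 < 1 ->
  (a = 1 -> r1 <= r2 /\ r2 < 1) /\ (a < 1 -> r1 < r2 /\ r2 < 1).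
Proof.
move=> E1 E2 b10 b20 hb a0 a1 hpos r21.
have c1 : 0 < 1 + b1 by lra.
have c2 : 0 < 1 + b2 by lra.
have R1 : r1 = b1 / (1 + b1) by rewrite -[b1 in b1 / _]E1 mulfK // gt_eqF.
have R2 : r2 = b2 / (1 + b2) by rewrite -[b2 in b2 / _]E2 mulfK // gt_eqF.
have key : r2 - r1 = (b2 - b1) / ((1 + b1) * (1 + b2)).
  by rewrite R1 R2; field; rewrite !gt_eqF.
have d0 : 0 < (1 + b1) * (1 + b2) by rewrite mulr_gt0.
have bb : b1 <= b2 by nra.
split=> [_|a_lt1]; split => //.
  by rewrite -subr_ge0 key divr_ge0 ?subr_ge0 // ltW.
have b2p : 0 < b2 by case: hpos => h; nra.
have bs : b1 < b2 by nra.
by rewrite -subr_gt0 key divr_gt0 ?subr_gt0.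
Qed.

Lemma arith_F (R : realType) (x y : R) : y * (1 - x) <= x -> y <= x * (1 + y).
Proof. move=> H; nra. Qed.

Lemma core (R : realType) k (W1 W2 B1 B2 : 'M[R]_k) (a : R) :
  mx_nonneg W1 -> mx_nonneg W2 ->
  spectral_radius W1 < 1 -> spectral_radius W2 < 1 ->
  (1%:M + B1) *m (1%:M - W1) = 1%:M -> (1%:M + B2) *m (1%:M - W2) = 1%:M ->
  0 < a -> mx_le B1 (a *: B2) ->
  spectral_radius W1 * (1 + spectral_radius B1) = spectral_radius B1 /\
  spectral_radius W2 * (1 + spectral_radius B2) = spectral_radius B2 /\
  spectral_radius B1 <= a * spectral_radius B2.
Proof.
move=> HW1 HW2 Hr1 Hr2 E1 E2 a0 Hle.
have [B10 _] := B_nonneg HW1 Hr1 E1.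
have [B20 _] := B_nonneg HW2 Hr2 E2.
have F (W B : 'M[R]_k) : mx_nonneg W -> spectral_radius W < 1 ->
    (1%:M + B) *m (1%:M - W) = 1%:M ->
    spectral_radius W * (1 + spectral_radius B) = spectral_radius B.
  move=> HW Hr E; apply/eqP; rewrite eq_le rhoW_upper //=.
  exact: arith_F (rhoB_upper Hr E).
split; first exact: F.
split; first exact: F.
exact: rho_mono.
Qed.

Lemma le_mul_l (R : realType) m n p (A : 'M[R]_(m, n)) (B B' : 'M[R]_(n, p)) :
  mx_nonneg A -> mx_le B B' -> mx_le (A *m B) (A *m B').
Proof.
by move=> HA HB i j; rewrite !mxE; apply: ler_sum => l _; apply: ler_wpM2l.
Qed.

Lemma le_mul_r (R : realType) m n p (A A' : 'M[R]_(m, n)) (B : 'M[R]_(n, p)) :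
  mx_nonneg B -> mx_le A A' -> mx_le (A *m B) (A' *m B).
Proof.
by move=> HB HA i j; rewrite !mxE; apply: ler_sum => l _; apply: ler_wpM2r.
Qed.

Unset Implicit Arguments. Set Strict Implicit.
Local Close Scope complex_scope.

Theorem theorem4p4 (R : realType) (m n : nat)
  (A U1 V1 U2 V2 : 'M[R]_(m, n)) (Ad U1d U2d : 'M[R]_(n, m)) (alpha : R) :
  is_MPinv A Ad -> mx_nonneg Ad ->
  is_MPinv U1 U1d -> is_MPinv U2 U2d ->
  proper_splitting A U1 V1 -> proper_splitting A U2 V2 ->
  convergent_splitting U1 V1 U1d -> convergent_splitting U2 V2 U2d ->
  ((type_I U1 V1 U1d /\ type_I U2 V2 U2d) \/
   (type_II U1 V1 U1d /\ type_II U2 V2 U2d)) ->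
  0 < alpha -> alpha <= 1 ->
  mx_le V1 (alpha *: V2) ->
  (0 < spectral_radius (Ad *m V1) \/ 0 < spectral_radius (Ad *m V2)) ->
  (alpha = 1 ->
     spectral_radius (U1d *m V1) <= spectral_radius (U2d *m V2) /\
     spectral_radius (U2d *m V2) < 1) /\
  (alpha < 1 ->
     spectral_radius (U1d *m V1) < spectral_radius (U2d *m V2) /\
     spectral_radius (U2d *m V2) < 1).
Proof.
move=> HA Ad0 HU1 HU2 PS1 PS2 C1 C2 Htype a0 a1 HV Hpos.
rewrite /convergent_splitting in C1 C2.
have [I1 I1'] := splitting_id HA HU1 PS1.
have [I2 I2'] := splitting_id HA HU2 PS2.
case: Htype => [[T1 T2]|[T1 T2]].
- have Hle : mx_le (Ad *m V1) (alpha *: (Ad *m V2)).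
    by rewrite scalemxAr; apply: le_mul_l.
  have [E1 [E2 Hb]] := core T1 T2 C1 C2 I1 I2 a0 Hle.
  exact: (final_arith E1 E2 (rho_ge0 _) (rho_ge0 _) Hb a0 a1 Hpos C2).
- have Hle : mx_le (V1 *m Ad) (alpha *: (V2 *m Ad)).
    by rewrite scalemxAl; apply: le_mul_r.
  rewrite (rho_XY U1d V1) (rho_XY U2d V2) in C1 C2 *.
  rewrite (rho_XY Ad V1) (rho_XY Ad V2) in Hpos.
  have [E1 [E2 Hb]] := core T1 T2 C1 C2 I1' I2' a0 Hle.
  exact: (final_arith E1 E2 (rho_ge0 _) (rho_ge0 _) Hb a0 a1 Hpos C2).
Qed.
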